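(* Let $G=(V,E)$ and $G'=(V',E')$ be undirected graphs. Then $\sigma(G\boxtimes G')=\sigma(G)\times\sigma(G')$, i.e. the semi-uniform structure $\mathcal{E}_{G\boxtimes G'}$ on $V\times V'$ coincides with the product semi-uniform structure $\mathcal{E}_G\times\mathcal{E}_{G'}$.
   Context: A semi-uniform structure on a set $X$ is a filter $\mathcal{U}$ on $X\times X$ (nonempty, not containing $\emptyset$, closed under supersets and finite intersections) such that every $U\in\mathcal{U}$ contains the diagonal and $U^{-1}\in\mathcal{U}$ for all $U\in\mathcal{U}$. For an undirected graph $G=(V,E)$, $\sigma(G)=(V,\mathcal{E}_G)$ where $\mathcal{E}_G$ is the filter on $V\times V$ generated by $E\cup\Delta_V$ (edges regarded as symmetric pairs). The strong graph product $G\boxtimes G'$ has vertex set $V\times V'$, and $((v_0,v_0'),(v_1,v_1'))$ is an edge iff either $(v_0,v_1)\in E$ and $(v_0',v_1')\in E'$, or $v_0=v_1$ and $(v_0',v_1')\in E'$, or $(v_0,v_1)\in E$ and $v_0'=v_1'$. For semi-uniform spaces $(X,\mathcal{U})$, $(Y,\mathcal{V})$, the product structure $\mathcal{U}\times\mathcal{V}$ on $X\times Y$ is the filter on $(X\times Y)\times(X\times Y)$ generated by the sets $\{((x_1,y_1),(x_2,y_2)):(x_1,x_2)\in U,(y_1,y_2)\in V\}$ with $U\in\mathcal{U}$, $V\in\mathcal{V}$. *)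

(* Defs.v *)
(* Sets are predicates; a filter on a type T is a
   predicate on sets (T -> Prop) -> Prop. *)
From Stdlib Require Import List.
Set Implicit Arguments.

Definition rel_set (X : Type) := X -> X -> Prop.

Definition inter_list (T : Type) (l : list (T -> Prop)) : T -> Prop :=
  fun x => forall A, In A l -> A x.

Definition generated_filter (T : Type) (B : (T -> Prop) -> Prop)
  : (T -> Prop) -> Prop :=
  fun U => exists l : list (T -> Prop),
      (forall A, In A l -> B A) /\ (forall x, inter_list l x -> U x).

Record graph (V : Type) := Graph {
  edge : V -> V -> Prop;
  edge_sym : forall x y, edge x y -> edge y x }.

Definition sigma_graph (V : Type) (G : graph V) : (V * V -> Prop) -> Prop :=
  generated_filter (fun A : V * V -> Prop =>
    forall p : V * V, A p <-> (edge G (fst p) (snd p) \/ fst p = snd p)).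

Definition strong_edge (V W : Type) (G : graph V) (H : graph W)
  (a b : V * W) : Prop :=
  (edge G (fst a) (fst b) /\ edge H (snd a) (snd b)) \/
  (fst a = fst b /\ edge H (snd a) (snd b)) \/
  (edge G (fst a) (fst b) /\ snd a = snd b).

Lemma strong_edge_sym (V W : Type) (G : graph V) (H : graph W) (a b : V * W) :
  strong_edge G H a b -> strong_edge G H b a.
Proof.
  unfold strong_edge; intros [[h1 h2]|[[h1 h2]|[h1 h2]]].
  - left; split; apply edge_sym; assumption.
  - right; left; split; [symmetry; assumption | apply edge_sym; assumption].
  - right; right; split; [apply edge_sym; assumption | symmetry; assumption].
Qed.

Definition strong_product (V W : Type) (G : graph V) (H : graph W)
  : graph (V * W) := @Graph (V * W) (strong_edge G H) (@strong_edge_sym V W G H).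

Definition product_structure (X Y : Type)
  (U : (X * X -> Prop) -> Prop) (W : (Y * Y -> Prop) -> Prop)
  : ((X * Y) * (X * Y) -> Prop) -> Prop :=
  generated_filter (fun A : (X * Y) * (X * Y) -> Prop =>
    exists U0 W0, U U0 /\ W W0 /\
      forall p : (X * Y) * (X * Y),
        A p <-> (U0 (fst (fst p), fst (snd p)) /\ W0 (snd (fst p), snd (snd p)))).

(* Main.v *)
Require Import Defs.
From Stdlib Require Import List.

Lemma sigma_iff (V : Type) (G : graph V) (U : V * V -> Prop) :
  sigma_graph G U <-> forall p, (edge G (fst p) (snd p) \/ fst p = snd p) -> U p.
Proof.
  split.
  - intros [l [Hl Hsub]] p Hp. apply Hsub. intros A HA. apply (Hl A HA). exact Hp.
  - intros Hsub. exists (cons (fun p => edge G (fst p) (snd p) \/ fst p = snd p) nil).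
    split.
    + intros A [<-|[]]. intro p; tauto.
    + intros x Hx. apply Hsub. apply Hx. left; reflexivity.
Qed.

Lemma prod_iff (V W : Type) (G : graph V) (H : graph W) A :
  product_structure (sigma_graph G) (sigma_graph H) A <->
  forall p : (V * W) * (V * W),
    (edge G (fst (fst p)) (fst (snd p)) \/ fst (fst p) = fst (snd p)) /\
    (edge H (snd (fst p)) (snd (snd p)) \/ snd (fst p) = snd (snd p)) -> A p.
Proof.
  split.
  - intros [l [Hl Hsub]] p Hp. apply Hsub. intros B HB.
    destruct (Hl B HB) as [U0 [W0 [HU [HW HB']]]]. apply HB'.
    rewrite sigma_iff in HU, HW. split; [apply HU|apply HW]; simpl; tauto.
  - intros Hsub.
    exists (cons (fun p : (V * W) * (V * W) =>
    (edge G (fst (fst p)) (fst (snd p)) \/ fst (fst p) = fst (snd p)) /\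
    (edge H (snd (fst p)) (snd (snd p)) \/ snd (fst p) = snd (snd p))) nil).
    split.
    + intros B [<-|[]].
      exists (fun q => edge G (fst q) (snd q) \/ fst q = snd q).
      exists (fun q => edge H (fst q) (snd q) \/ fst q = snd q).
      split; [|split].
      * apply sigma_iff; auto.
      * apply sigma_iff; auto.
      * intro p; simpl; tauto.
    + intros x Hx. apply Hsub. apply Hx. left; reflexivity.
Qed.

Theorem proposition5p3 (V W : Type) (G : graph V) (H : graph W) :
  forall A : (V * W) * (V * W) -> Prop,
    sigma_graph (strong_product G H) A <->
    product_structure (sigma_graph G) (sigma_graph H) A.
Proof.
  intro A. rewrite sigma_iff, prod_iff.
  split; intros Hs p Hp; apply Hs; destruct p as [[a1 a2] [b1 b2]];
    simpl in *; unfold strong_product in *; simpl in *; unfold strong_edge in *; simpl in *.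
  - destruct Hp as [[e1|e1] [e2|e2]].
    + left; left; tauto.
    + subst; left; right; right; tauto.
    + subst; left; right; left; tauto.
    + subst; right; reflexivity.
  - destruct Hp as [[[h1 h2]|[[h1 h2]|[h1 h2]]]|e].
    + tauto.
    + subst; tauto.
    + subst; tauto.
    + injection e; intros; subst; tauto.
Qed.
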